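(* Let $n\ge2$, $k\in\{1,\dots,n\}$, $\epsilon=1/\sqrt{n(n-1)}$, and let the Pauli strings $W_1,\dots,W_n$ on $n-1$ qubits and coefficients $c_1,\dots,c_n$ be as in the context. Define $O_k=\sum_{j=1}^n c_jW_j$ and $\mathcal E_k=W_k$ (so $\mathcal E_k=Z_k$ for $k<n$ and $\mathcal E_n=\prod_{j=1}^{n-1}Z_j$). For $1\le m<n$ let $R_m=\exp(-i\theta_mG_m/2)$, where - for $1\le m<k$: $G_m=iW_{m+1}W_m$, and $\theta_m=\arctan(\sqrt m)$ if $m<k-1$, $\theta_{k-1}=\arctan\!\big(\sqrt{k-1}\,\epsilon/c_k\big)$; - for $k\le m<n$: $G_m=iW_mW_{m+1}$, and $\theta_m=\arctan(\sqrt{n-m})$ if $m>k$, $\theta_k=\arctan\!\Big(\frac{\sqrt{n-k}\,\epsilon}{\sqrt{(k-1)\epsilon^2+c_k^2}}\Big)$. Let $U=U_RU_L$ with $U_L=R_{k-1}R_{k-2}\cdots R_1$ and $U_R=R_kR_{k+1}\cdots R_{n-1}$ (empty products equal the identity). Then $UO_kU^\dagger=\mathcal E_k$.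
   Context: $X_j,Y_j,Z_j$ are Pauli operators on qubit $j$ of an $(n-1)$-qubit system; empty products of $Z$'s are the identity. For $k\ne n$: for $1\le j<k$, $W_j=Y_jZ_{j+1}\cdots Z_{k-1}Y_k$, $c_j=\epsilon$; $W_k=Z_k$, $c_k=\sqrt{(n-1)/n}$; for $k<j<n$, $W_j=X_kZ_{k+1}\cdots Z_{j-1}X_j$, $c_j=\epsilon$; and $W_n=X_kZ_{k+1}\cdots Z_{n-1}$, $c_n=\epsilon$. For $k=n$: for $1\le j<n$, $W_j=-Z_1Z_2\cdots Z_{j-1}X_j$, $c_j=\epsilon$; $W_n=\prod_{j=1}^{n-1}Z_j$, $c_n=\sqrt{(n-1)/n}$. *)

(* Defs.v *)
From HB Require Import structures.
From mathcomp Require Import all_boot all_order all_algebra.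
From mathcomp Require Import all_classical all_reals all_analysis.
From mathcomp Require Import complex.
Set Implicit Arguments. Unset Strict Implicit. Unset Printing Implicit Defensive.
Import Order.TTheory GRing.Theory Num.Theory numFieldNormedType.Exports.
Local Open Scope ring_scope.
Local Open Scope complex_scope.

Section Qubits.
Variable R : realType.
Local Notation C := R[i].

(* Hilbert space of q qubits: dimension 2^q, written (2^q).-1.+1 (= 2^q since
   2^q > 0) so that square matrices canonically form a ring. *)
Definition qdim (q : nat) : nat := ((2 ^ q)%N).-1.+1.
Lemma qdimE q : qdim q = (2 ^ q)%N.
Proof. by rewrite /qdim prednK // expn_gt0. Qed.

(* computational-basis bit l of the basis index x (qubit l+1) *)
Definition qbit (l x : nat) : bool := odd (x %/ 2 ^ l)%N.

(* single-qubit operator P : 'M_2 acting on qubit j (1-indexed) of q qubits *)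
Definition on_qubit (q j : nat) (P : 'M[C]_2) : 'M[C]_(qdim q) :=
  \matrix_(a, b)
    (if [forall l : 'I_q, (val l != j.-1) ==> (qbit l a == qbit l b)]
     then P (inord (qbit j.-1 a)) (inord (qbit j.-1 b)) else 0).

Definition pauliX : 'M[C]_2 := \matrix_(a, b) (if a == b then 0 else 1).
Definition pauliY : 'M[C]_2 :=
  \matrix_(a, b) (if a == b then 0 else if (val a == 0)%N then - 'i else 'i).
Definition pauliZ : 'M[C]_2 :=
  \matrix_(a, b) (if a == b then (if (val a == 0)%N then 1 else -1) else 0).

Definition Xq q j := on_qubit q j pauliX.
Definition Yq q j := on_qubit q j pauliY.
Definition Zq q j := on_qubit q j pauliZ.

Definition Zs q l r : 'M[C]_(qdim q) := \prod_(l <= i < r) Zq q i.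

Definition adj N (A : 'M[C]_N) : 'M[C]_N := (map_mx conjc A)^T.

Definition expm_partial N (A : 'M[C]_N.+1) (m : nat) : 'M[C]_N.+1 :=
  \sum_(k < m) ((k`!)%:R)^-1 *: A ^+ k.
Definition expm N (A : 'M[C]_N.+1) : 'M[C]_N.+1 :=
  \matrix_(a, b) ((limn (fun m => complex.Re (expm_partial A m a b)))
                    +i* (limn (fun m => complex.Im (expm_partial A m a b)))).

Section Construction.
Variables n k : nat.
Let q := n.-1.

Definition eps : R := (Num.sqrt (n%:R * (n%:R - 1)))^-1.

Definition W (j : nat) : 'M[C]_(qdim q) :=
  if k != n then
    if (j < k)%N then Yq q j * Zs q j.+1 k * Yq q k
    else if j == k then Zq q k
    else if (j < n)%N then Xq q k * Zs q k.+1 j * Xq q j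
    else Xq q k * Zs q k.+1 n
  else
    if (j < n)%N then - (Zs q 1 j * Xq q j)
    else Zs q 1 n.

Definition c (j : nat) : R :=
  if j == k then Num.sqrt ((n%:R - 1) / n%:R) else eps.

Definition O_k : 'M[C]_(qdim q) := \sum_(1 <= j < n.+1) (c j)%:C *: W j.
Definition E_k : 'M[C]_(qdim q) := W k.

Definition G (m : nat) : 'M[C]_(qdim q) :=
  if (m < k)%N then 'i *: (W m.+1 * W m) else 'i *: (W m * W m.+1).

Definition theta (m : nat) : R :=
  if (m < k)%N then
    (if (m < k.-1)%N then atan (Num.sqrt m%:R)
     else atan (Num.sqrt (k.-1)%:R * eps / c k))
  else
    (if (k < m)%N then atan (Num.sqrt (n - m)%:R)
     else atan (Num.sqrt (n - k)%:R * eps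
                / Num.sqrt ((k.-1)%:R * eps ^+ 2 + c k ^+ 2))).

Definition Rot (m : nat) : 'M[C]_(qdim q) :=
  expm ((- 'i * (theta m / 2)%:C) *: G m).

Definition U_L : 'M[C]_(qdim q) := \prod_(i < k.-1) Rot (k.-1 - i).
Definition U_R : 'M[C]_(qdim q) := \prod_(k <= m < n) Rot m.
Definition U : 'M[C]_(qdim q) := U_R * U_L.

End Construction.
End Qubits.

(* Main.v *)
Require Import Defs.
From HB Require Import structures.
From mathcomp Require Import all_boot all_order all_algebra.
From mathcomp Require Import all_classical all_reals all_analysis.
From mathcomp Require Import complex.
From mathcomp Require Import zify ring lra.
Set Implicit Arguments. Unset Strict Implicit. Unset Printing Implicit Defensive.
Import Order.TTheory GRing.Theory Num.Theory numFieldNormedType.Exports.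
Local Open Scope ring_scope.
Local Open Scope complex_scope.


Ltac bdec := rewrite ?eqn_leq; repeat (match goal with
 | |- context [(?a <= ?b)%N] => let h := fresh "h" in case: (boolP (a <= b)%N) => h
 end; try (exfalso; lia)); try done.

Section Bits.
Variable R : realType.
Local Notation C := R[i].
Variable q : nat.
Definition bvec := {ffun 'I_q -> bool}.
Definition bits (x : nat) : bvec := [ffun l : 'I_q => qbit l x].

Lemma qbit0 x : qbit 0 x = odd x.
Proof. by rewrite /qbit expn0 divn1. Qed.
Lemma qbitS l x : qbit l.+1 x = qbit l x./2.
Proof. by rewrite /qbit expnS divnMA -divn2 -divnMA mulnC divnMA. Qed.

Lemma bits_eq_nat p x y : (x < 2 ^ p)%N -> (y < 2 ^ p)%N ->
  (forall l, (l < p)%N -> qbit l x = qbit l y) -> x = y.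
Proof.
elim: p x y => [|p IH] x y.
  by rewrite expn0 !ltnS !leqn0 => /eqP -> /eqP ->.
move=> hx hy h.
have ho : odd x = odd y by rewrite -!qbit0; apply: h.
have hh : x./2 = y./2.
  apply: IH.
  - by rewrite -divn2 ltn_divLR // -expnSr.
  - by rewrite -divn2 ltn_divLR // -expnSr.
  by move=> l hl; rewrite -!qbitS; apply: h.
by rewrite -(odd_double_half x) -(odd_double_half y) ho hh.
Qed.

Lemma bits_inj : injective (fun x : 'I_(qdim q) => bits x).
Proof.
move=> x y /ffunP h; apply: val_inj.
have hx : (val x < 2 ^ q)%N by rewrite -qdimE ltn_ord.
have hy : (val y < 2 ^ q)%N by rewrite -qdimE ltn_ord.
apply: (bits_eq_nat hx hy).
move=> l hl; have := h (Ordinal hl); by rewrite !ffunE.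
Qed.

Lemma bits_bij : bijective (fun x : 'I_(qdim q) => bits x).
Proof.
apply: inj_card_bij; first exact: bits_inj.
by rewrite card_ffun card_bool !card_ord qdimE.
Qed.

Lemma sum_bits (G : 'I_(qdim q) -> C) (F : bvec -> C) :
  (forall c, G c = F (bits c)) -> \sum_c G c = \sum_t F t.
Proof.
move=> hG; rewrite (reindex (fun x : 'I_(qdim q) => bits x)) /=.
  by apply: eq_bigr => c _; rewrite hG.
by case: bits_bij => g h1 h2; exists g => y _; [apply: h1|apply: h2].
Qed.

End Bits.

Section Pauli.
Variable R : realType.
Local Notation C := R[i].
Variable q : nat.
Local Notation M := 'M[C]_(qdim q).

Definition bxor (s t : bvec q) : bvec q := [ffun l => s l (+) t l].
Definition par (z t : bvec q) : bool := \big[addb/false]_(l < q) (z l && t l).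
Definition b0 : bvec q := [ffun => false].
Definition pm (x z : bvec q) : M :=
  \matrix_(a, b) (if bits q a == bxor (bits q b) x then (-1) ^+ par z (bits q b) else 0).

Lemma bxorA a b c : bxor a (bxor b c) = bxor (bxor a b) c.
Proof. by apply/ffunP => l; rewrite !ffunE addbA. Qed.
Lemma bxorC a b : bxor a b = bxor b a.
Proof. by apply/ffunP => l; rewrite !ffunE addbC. Qed.
Lemma bxorK a b : bxor (bxor a b) b = a.
Proof. by apply/ffunP => l; rewrite !ffunE addbK. Qed.
Lemma bxor0 a : bxor a b0 = a.
Proof. by apply/ffunP => l; rewrite !ffunE addbF. Qed.

Lemma parDr z s t : par z (bxor s t) = par z s (+) par z t.
Proof.
rewrite /par -big_split /=; apply: eq_bigr => l _.
by rewrite ffunE; case: (z l).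
Qed.
Lemma parDl z1 z2 t : par (bxor z1 z2) t = par z1 t (+) par z2 t.
Proof.
rewrite /par -big_split /=; apply: eq_bigr => l _.
by rewrite ffunE; case: (t l); rewrite ?andbT ?andbF.
Qed.
Lemma par0l t : par b0 t = false.
Proof. by rewrite /par big1 // => l _; rewrite ffunE. Qed.
Lemma par0r t : par t b0 = false.
Proof. by rewrite /par big1 // => l _; rewrite ffunE andbF. Qed.

Lemma pm_mul x1 z1 x2 z2 :
  pm x1 z1 * pm x2 z2 = (-1) ^+ par z1 x2 *: pm (bxor x1 x2) (bxor z1 z2).
Proof.
apply/matrixP => a b; rewrite -mulmxE !mxE.
rewrite (@sum_bits R q _ (fun t => (if bits q a == bxor t x1 then (-1) ^+ par z1 t else 0) *
   (if t == bxor (bits q b) x2 then (-1) ^+ par z2 (bits q b) else 0))); last first.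
  by move=> c; rewrite !mxE.
rewrite (bigD1 (bxor (bits q b) x2)) //= big1 ?addr0; last first.
  by move=> t /negbTE ->; rewrite mulr0.
rewrite eqxx -bxorA (bxorC x2 x1).
case: eqP => _; last by rewrite mul0r mulr0.
rewrite parDr parDl !signr_addb; ring.
Qed.

Lemma pm_adj x z : adj (pm x z) = (-1) ^+ par z x *: pm x z.
Proof.
apply/matrixP => a b; rewrite !mxE.
have E : (bits q b == bxor (bits q a) x) = (bits q a == bxor (bits q b) x).
  apply/eqP/eqP => ->; by rewrite bxorK.
rewrite E; case: eqP => [->|_]; last by rewrite conjc0 mulr0.
by rewrite rmorph_sign parDr signr_addb mulrC.
Qed.


Lemma pm00 : pm b0 b0 = 1.
Proof.
apply/matrixP => a b; rewrite !mxE bxor0 par0l expr0.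
case: eqP => [/bits_inj ->|h]; first by rewrite eqxx.
by case: eqP => // hab; case: h; rewrite hab.
Qed.

Lemma pmZ_mul (s1 s2 : C) x1 z1 x2 z2 :
  (s1 *: pm x1 z1) * (s2 *: pm x2 z2) =
  (s1 * s2 * (-1) ^+ par z1 x2) *: pm (bxor x1 x2) (bxor z1 z2).
Proof. by rewrite -scalerAl -scalerAr pm_mul !scalerA; congr (_ *: _); ring. Qed.

End Pauli.


Section OnQ.
Variable R : realType.
Local Notation C := R[i].
Variable q : nat.
Local Notation M := 'M[C]_(qdim q).

Definition mk (P : nat -> bool) : bvec q := [ffun i : 'I_q => P i.+1].

Lemma mk_xor P Q : bxor (mk P) (mk Q) = mk (fun i => P i (+) Q i).
Proof. by apply/ffunP => l; rewrite !ffunE. Qed.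

Lemma eq_mk P Q : (forall i, (0 < i <= q)%N -> P i = Q i) -> mk P = mk Q.
Proof. by move=> h; apply/ffunP => l; rewrite !ffunE h //= ltn_ord. Qed.

Lemma mk0 : mk (fun _ => false) = b0 q.
Proof. by apply/ffunP => l; rewrite !ffunE. Qed.

Lemma mk_pt j (J : 'I_q) : val J = j.-1 -> (0 < j)%N ->
  mk (fun i => i == j) = [ffun l => l == J].
Proof.
move=> hJ hj; apply/ffunP => l; rewrite !ffunE.
apply/eqP/eqP => [h|->]; first by apply/val_inj; rewrite /= hJ -h.
by rewrite hJ prednK.
Qed.

Lemma par_ptr z (J : 'I_q) : par z [ffun l => l == J] = z J.
Proof.
rewrite /par (bigD1 J) //= big1 ?addbF; first by rewrite ffunE eqxx andbT.
by move=> l /negbTE hl; rewrite ffunE hl andbF.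
Qed.
Lemma par_ptl z (J : 'I_q) : par [ffun l => l == J] z = z J.
Proof.
rewrite /par (bigD1 J) //= big1 ?addbF; first by rewrite ffunE eqxx.
by move=> l /negbTE hl; rewrite ffunE hl.
Qed.

Lemma eq_e (s t : bvec q) (J : 'I_q) :
  (s == bxor t [ffun l => l == J]) = [forall l, (l != J) ==> (s l == t l)] && (s J == ~~ t J).
Proof.
apply/eqP/andP => [-> | [/forallP h /eqP hJ]].
- split; last by rewrite !ffunE eqxx addbT.
  apply/forallP => l; apply/implyP => /negbTE hl; by rewrite !ffunE hl addbF.
- apply/ffunP => l; rewrite !ffunE; case: (eqVneq l J) => [->|hl]; first by rewrite addbT.
  by rewrite addbF; apply/eqP; exact: (implyP (h l) hl).
Qed.

Lemma eq_same (s t : bvec q) (J : 'I_q) :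
  (s == t) = [forall l, (l != J) ==> (s l == t l)] && (s J == t J).
Proof.
apply/eqP/andP => [-> | [/forallP h /eqP hJ]].
- split => //; apply/forallP => l; apply/implyP => _; by [].
- apply/ffunP => l; case: (eqVneq l J) => [->|hl] //.
  by apply/eqP; exact: (implyP (h l) hl).
Qed.

Lemma on_qubitE j (P : 'M[C]_2) (a b : 'I_(qdim q)) (J : 'I_q) : val J = j.-1 ->
  on_qubit q j P a b = if [forall l, (l != J) ==> (bits q a l == bits q b l)]
     then P (inord (bits q a J)) (inord (bits q b J)) else 0.
Proof.
move=> hJ; rewrite mxE !ffunE -hJ.
congr (if _ then _ else _); apply: eq_forallb => l; rewrite !ffunE.
by congr (_ ==> _).
Qed.

Lemma inord2E (x y : bool) : ((inord x : 'I_2) == inord y) = (x == y).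
Proof. case: x; case: y; rewrite ?eqxx //; apply/negbTE/eqP => /(congr1 val) /=; rewrite !inordK //. Qed.
Lemma inord2v (x : bool) : (val (inord x : 'I_2) == 0)%N = ~~ x.
Proof. by case: x; rewrite -[val _]/(nat_of_ord _) inordK. Qed.

Variable j : nat.
Hypothesis hj : (0 < j <= q)%N.
Lemma hjq : (j.-1 < q)%N.
Proof. by case/andP: hj => h1 h2; rewrite -ltnS prednK. Qed.
Let J : 'I_q := Ordinal hjq.
Lemma mkJ : mk (fun i => i == j) = [ffun l => l == J].
Proof. by apply: mk_pt => //; case/andP: hj. Qed.

Lemma X_pm : Xq R q j = pm R (mk (fun i => i == j)) (b0 q).
Proof.
apply/matrixP => a b; rewrite /Xq (@on_qubitE j _ a b J) // !mxE mkJ eq_e par0l expr0.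
case: [forall l, _] => //=; rewrite inord2E.
by case: (bits q a J); case: (bits q b J).
Qed.

Lemma Z_pm : Zq R q j = pm R (b0 q) (mk (fun i => i == j)).
Proof.
apply/matrixP => a b; rewrite /Zq (@on_qubitE j _ a b J) // !mxE mkJ bxor0 (eq_same _ _ J) par_ptl.
case: [forall l, _] => //=; rewrite inord2E inord2v.
by case: (bits q a J); case: (bits q b J).
Qed.

Lemma Y_pm : Yq R q j = 'i *: pm R (mk (fun i => i == j)) (mk (fun i => i == j)).
Proof.
apply/matrixP => a b; rewrite /Yq (@on_qubitE j _ a b J) // !mxE mkJ eq_e par_ptl.
case: [forall l, _] => //=; last by rewrite mulr0.
rewrite inord2E inord2v.
by case: (bits q a J); case: (bits q b J); rewrite /= ?mulr0 ?mulr1 ?mulrN1.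
Qed.

End OnQ.


Section ZsRep.
Variable R : realType.
Local Notation C := R[i].
Variable q : nat.

Lemma pmS_mul (s : C) (x1 z1 x2 z2 : bvec q) :
  (s *: pm R x1 z1) * pm R x2 z2 = (s * (-1) ^+ par z1 x2) *: pm R (bxor x1 x2) (bxor z1 z2).
Proof. by rewrite -scalerAl pm_mul scalerA. Qed.
Lemma pm_mulS (s : C) (x1 z1 x2 z2 : bvec q) :
  pm R x1 z1 * (s *: pm R x2 z2) = (s * (-1) ^+ par z1 x2) *: pm R (bxor x1 x2) (bxor z1 z2).
Proof. by rewrite -scalerAr pm_mul scalerA. Qed.

Lemma par_mk_pt Z j : (0 < j <= q)%N -> par (mk q Z) (mk q (fun i => i == j)) = Z j.
Proof.
move=> hj; rewrite (mkJ hj) par_ptr ffunE /=.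
by case/andP: hj => h1 _; rewrite prednK.
Qed.
Lemma par_mk0 Z : par (mk q Z) (mk q (fun _ => false)) = false.
Proof. by rewrite mk0 par0r. Qed.

Lemma Zs_pm l r : (0 < l)%N -> (r <= q.+1)%N ->
  Zs R q l r = pm R (b0 q) (mk q (fun i => l <= i < r)%N).
Proof.
move=> hl; elim: r => [|r IH] hr.
  rewrite /Zs big_geq // (_ : mk q _ = b0 q) ?pm00 // -(@mk0 q).
  by apply: eq_mk => i _; rewrite ltn0 andbF.
case: (leqP l r) => hlr; last first.
  rewrite /Zs big_geq // (_ : mk q _ = b0 q) ?pm00 // -(@mk0 q).
  by apply: eq_mk => i _; apply/negbTE/negP => /andP[h1 h2]; lia.
rewrite /Zs big_nat_recr //= -/(Zs R q l r) IH 1?ltnW // Z_pm; last by lia.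
rewrite pm_mul par0r expr0 scale1r bxor0 mk_xor; congr (pm _ _ _).
by apply: eq_mk => i _; bdec.
Qed.
End ZsRep.


Section WRep.
Variable R : realType.
Local Notation C := R[i].
Variables n k : nat.
Hypothesis hn : (2 <= n)%N.
Hypothesis hk : (0 < k <= n)%N.
Local Notation q := n.-1.

Definition xW j : nat -> bool := fun i =>
  if k != n then
    (if (j < k)%N then (i == j) (+) (i == k) else if j == k then false
     else if (j < n)%N then (i == k) (+) (i == j) else (i == k))
  else (if (j < n)%N then i == j else false).
Definition zW j : nat -> bool := fun i =>
  if k != n then
    (if (j < k)%N then (j <= i <= k)%N else if j == k then i == k
     else if (j < n)%N then (k < i < j)%N else (k < i < n)%N)
  else (0 < i < j)%N.
Definition sW j : C :=
  if k != n then (if (j < k)%N then -1 else 1) else (if (j < n)%N then -1 else 1).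

Lemma W_repA j : k != n -> (0 < j)%N -> (j < k)%N ->
  W R n k j = sW j *: pm R (mk q (xW j)) (mk q (zW j)).
Proof.
move=> hkn hj hjk; rewrite /W /sW /xW /zW hkn hjk.
rewrite (@Y_pm R q j) ?(@Y_pm R q k) ?(@Zs_pm R q) //; try lia.
rewrite pmS_mul par0r expr0 mulr1 bxor0 pmZ_mul !mk_xor par_mk_pt; last by lia.
have -> : (k == j) (+) (j < k < k)%N = false by bdec.
rewrite expr0 mulr1 -expr2 sqr_i; congr (_ *: pm R _ _).
by apply: eq_mk => i hi; bdec.
Qed.

Lemma W_repB : k != n -> W R n k k = sW k *: pm R (mk q (xW k)) (mk q (zW k)).
Proof.
move=> hkn; rewrite /W /sW /xW /zW hkn ltnn eqxx (@Z_pm R q k) -?mk0 ?scale1r //; lia.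
Qed.

Lemma W_repC j : k != n -> (k < j)%N -> (j < n)%N ->
  W R n k j = sW j *: pm R (mk q (xW j)) (mk q (zW j)).
Proof.
move=> hkn hkj hjn; rewrite /W /sW /xW /zW hkn ltnNge (ltnW hkj) /= hjn.
have -> : (j == k) = false by apply/eqP; lia.
rewrite (@X_pm R q j) ?(@X_pm R q k) ?(@Zs_pm R q) //; try lia.
rewrite -!mk0 pm_mul par_mk0 expr0 scale1r pm_mul !mk_xor par_mk_pt; last by lia.
have -> : (false (+) (k < j < j)%N) = false by bdec.
rewrite expr0 !scale1r; congr (pm R _ _); by apply: eq_mk => i hi; bdec.
Qed.

Lemma W_repD : k != n -> W R n k n = sW n *: pm R (mk q (xW n)) (mk q (zW n)).
Proof.
move=> hkn; rewrite /W /sW /xW /zW hkn ltnn ltnNge (ltnW _) /=; last by lia.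
have -> : (n == k) = false by apply/eqP; lia.
rewrite (@X_pm R q k) ?(@Zs_pm R q) //; try lia.
rewrite -!mk0 pm_mul par_mk0 expr0 !scale1r !mk_xor.
congr (pm R _ _); by apply: eq_mk => i hi; bdec.
Qed.

Lemma W_repE j : k = n -> (0 < j)%N -> (j < n)%N ->
  W R n k j = sW j *: pm R (mk q (xW j)) (mk q (zW j)).
Proof.
move=> hkn hj hjn; rewrite /W /sW /xW /zW hkn eqxx /= hjn.
rewrite (@X_pm R q j) ?(@Zs_pm R q) //; try lia.
rewrite -!mk0 pm_mul par_mk_pt; last by lia.
have -> : (0 < j < j)%N = false by bdec.
rewrite expr0 scale1r scaleN1r !mk_xor; congr (- pm R _ _); by apply: eq_mk => i hi; bdec.
Qed.

Lemma W_repF : k = n -> W R n k n = sW n *: pm R (mk q (xW n)) (mk q (zW n)).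
Proof.
move=> hkn; rewrite /W /sW /xW /zW hkn eqxx /= ltnn.
rewrite (@Zs_pm R q) //; try lia.
rewrite -!mk0 scale1r; congr (pm R _ _); by apply: eq_mk => i hi; bdec.
Qed.

Lemma W_rep j : (0 < j <= n)%N ->
  W R n k j = sW j *: pm R (mk q (xW j)) (mk q (zW j)).
Proof.
move=> /andP[hj1 hj2]; case: (eqVneq k n) => hkn.
  case: (ltnP j n) => hjn; first exact: W_repE.
  have -> : j = n by lia.
  exact: W_repF.
case: (ltngtP j k) => hjk.
- exact: W_repA.
- case: (ltnP j n) => hjn; first exact: W_repC.
  have -> : j = n by lia.
  exact: W_repD.
- by rewrite hjk; apply: W_repB.
Qed.
End WRep.


Section Adj.
Variable R : realType.
Local Notation C := R[i].
Variable N : nat.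
Local Notation M := 'M[C]_N.+1.
Lemma adjD (A B : M) : adj (A + B) = adj A + adj B.
Proof. by apply/matrixP => a b; rewrite !mxE rmorphD. Qed.
Lemma adjN (A : M) : adj (- A) = - adj A.
Proof. by apply/matrixP => a b; rewrite !mxE rmorphN. Qed.
Lemma adjZ (s : C) (A : M) : adj (s *: A) = conjc s *: adj A.
Proof. by apply/matrixP => a b; rewrite !mxE rmorphM. Qed.
Lemma adjM (A B : M) : adj (A * B) = adj B * adj A.
Proof. by rewrite /adj -!mulmxE map_mxM trmx_mul. Qed.
Lemma adj1 : adj (1 : M) = 1.
Proof. by apply/matrixP => a b; rewrite !mxE eq_sym; case: eqP; rewrite ?conjc0 ?conjc1. Qed.
Lemma adjK (A : M) : adj (adj A) = A.
Proof. by apply/matrixP => a b; rewrite !mxE conjcK. Qed.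
End Adj.

Section WProps.
Variable R : realType.
Local Notation C := R[i].
Variables n k : nat.
Hypothesis hn : (2 <= n)%N.
Hypothesis hk : (0 < k <= n)%N.
Local Notation q := n.-1.

Lemma par_mk_2pt Z a b : (0 < a <= q)%N -> (0 < b <= q)%N ->
  par (mk q Z) (mk q (fun i => (i == a) (+) (i == b))) = Z a (+) Z b.
Proof.
move=> ha hb; rewrite -(mk_xor q (fun i => i == a) (fun i => i == b)) parDr.
by rewrite !par_mk_pt.
Qed.

Definition ev (Z : nat -> bool) j :=
  if k != n then (if (j < k)%N then Z j (+) Z k else if j == k then false
     else if (j < n)%N then Z k (+) Z j else Z k)
  else (if (j < n)%N then Z j else false).

Lemma par_xW Z j : (0 < j <= n)%N -> par (mk q Z) (mk q (xW n k j)) = ev Z j.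
Proof.
move=> /andP[hj1 hj2]; rewrite /xW /ev; case: (eqVneq k n) => hkn /=.
  case: (ltnP j n) => hjn; first by rewrite par_mk_pt //; lia.
  by rewrite par_mk0.
case: (ltngtP j k) => hjk.
- by rewrite par_mk_2pt //; lia.
- case: (ltnP j n) => hjn; first by rewrite par_mk_2pt //; lia.
  by rewrite par_mk_pt //; lia.
- by rewrite par_mk0.
Qed.

Lemma bxorxx (x : bvec q) : bxor x x = b0 q.
Proof. by apply/ffunP => l; rewrite !ffunE addbb. Qed.

Lemma sW_sq j : sW R n k j * sW R n k j = 1.
Proof. by rewrite /sW; case: (k != n); case: (j < k)%N; case: (j < n)%N; rewrite /= ?mulrNN mulr1. Qed.
Lemma sW_conj j : conjc (sW R n k j) = sW R n k j.
Proof. by rewrite /sW; case: (k != n); case: (j < k)%N; case: (j < n)%N; apply/eqP; rewrite eq_complex /= ?opprK ?oppr0 !eqxx. Qed.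

Lemma par_self j : (0 < j <= n)%N -> par (mk q (zW n k j)) (mk q (xW n k j)) = false.
Proof.
move=> hj; rewrite par_xW // /ev /zW.
case/andP: hj => hj1 hj2; bdec.
Qed.

Lemma par_anti i j : (0 < i <= n)%N -> (0 < j <= n)%N -> i != j ->
  par (mk q (zW n k i)) (mk q (xW n k j)) = ~~ par (mk q (zW n k j)) (mk q (xW n k i)).
Proof.
move=> hi hj hij; rewrite !par_xW // /ev /zW.
case/andP: hi => hi1 hi2; case/andP: hj => hj1 hj2; move: hij; rewrite eqn_leq => hij.
bdec.
Qed.

Lemma W_sq j : (0 < j <= n)%N -> W R n k j * W R n k j = 1.
Proof.
move=> hj; rewrite W_rep // pmZ_mul sW_sq mul1r par_self // expr0 scale1r !bxorxx pm00.
by [].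
Qed.

Lemma W_adj j : (0 < j <= n)%N -> adj (W R n k j) = W R n k j.
Proof.
move=> hj; rewrite W_rep // adjZ pm_adj par_self // expr0 scale1r sW_conj.
by [].
Qed.

Lemma W_anti i j : (0 < i <= n)%N -> (0 < j <= n)%N -> i != j ->
  W R n k i * W R n k j = - (W R n k j * W R n k i).
Proof.
move=> hi hj hij; rewrite !W_rep // !pmZ_mul (mulrC (sW R n k j)).
rewrite (bxorC (mk q (xW n k i))) (bxorC (mk q (zW n k i))) par_anti //.
case: (par _ _) => /=; by rewrite ?expr1 ?expr0 ?mulrN1 ?mulr1 ?scaleNr ?opprK.
Qed.
End WProps.

Section Givens.
Variable R : realType.
Local Notation C := R[i].
Variable N : nat.
Local Notation M := 'M[C]_N.+1.
Variables A B : M.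
Hypothesis hA : A * A = 1.
Hypothesis hB : B * B = 1.
Hypothesis hAB : A * B = - (B * A).
Variables c s : C.
Let T : M := c *: 1 + s *: (A * B).
Let T' : M := c *: 1 - s *: (A * B).

Lemma ABA : A * B * A = - B.
Proof. by rewrite hAB mulNr -mulrA hA mulr1. Qed.
Lemma BAB : B * A * B = - A.
Proof. by rewrite -mulrA hAB mulrN mulrA hB mul1r. Qed.
Lemma AAB : A * (A * B) = B.
Proof. by rewrite mulrA hA mul1r. Qed.
Lemma BAB' : B * (A * B) = - A.
Proof. by rewrite mulrA BAB. Qed.
Lemma KK : (A * B) * (A * B) = -1.
Proof. by rewrite mulrA ABA mulNr hB. Qed.

Lemma TA : T * A = c *: A - s *: B.
Proof. by rewrite /T mulrDl -!scalerAl mul1r ABA scalerN. Qed.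
Lemma TB : T * B = c *: B + s *: A.
Proof. by rewrite /T mulrDl -!scalerAl mul1r -mulrA hB mulr1. Qed.

Lemma TAT : T * A * T' = (c * c - s * s) *: A - (c * s + c * s) *: B.
Proof.
rewrite TA /T' mulrBl !mulrBr -!scalerAl -!scalerAr !scalerA mulr1 mulr1 AAB BAB'.
by apply/matrixP => a b; rewrite !mxE; ring.
Qed.
Lemma TBT : T * B * T' = (c * c - s * s) *: B + (c * s + c * s) *: A.
Proof.
rewrite TB /T' mulrDl !mulrBr -!scalerAl -!scalerAr !scalerA mulr1 mulr1 AAB BAB'.
by apply/matrixP => a b; rewrite !mxE; ring.
Qed.
Lemma TT : T * T' = (c * c + s * s) *: 1.
Proof.
rewrite /T /T' mulrDl !mulrBr -!scalerAl -!scalerAr !scalerA !mul1r mulr1 KK.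
by apply/matrixP => a b; rewrite !mxE; ring.
Qed.
Lemma Tcomm (D : M) : A * D = - (D * A) -> B * D = - (D * B) -> T * D = D * T.
Proof.
move=> hAD hBD; rewrite /T mulrDl mulrDr -!scalerAl -!scalerAr mul1r mulr1.
by rewrite -mulrA hBD mulrN mulrA hAD mulNr opprK mulrA.
Qed.
End Givens.

Section Expm.
Local Open Scope classical_set_scope.
Variable R : realType.
Local Notation C := R[i].

Lemma lim_ext (f g : nat -> R) (l : R) :
  (forall m, f m = g m) -> g @ \oo --> l -> lim (f @ \oo) = l.
Proof. by move=> /funext ->; apply: cvg_lim. Qed.

Lemma cvg_cos (t : R) : series (cos_coeff t) @ \oo --> cos t.
Proof. rewrite cos.unlock; exact: is_cvg_series_cos_coeff. Qed.
Lemma cvg_sin (t : R) : series (sin_coeff t) @ \oo --> sin t.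
Proof. rewrite sin.unlock; exact: is_cvg_series_sin_coeff. Qed.

Lemma ReE (x : R) (w : C) : complex.Re (x%:C * w) = x * complex.Re w.
Proof. by case: w => wr wi /=; rewrite mul0r subr0. Qed.
Lemma ImE (x : R) (w : C) : complex.Im (x%:C * w) = x * complex.Im w.
Proof. by case: w => wr wi /=; rewrite mul0r addr0. Qed.

Variable N : nat.
Local Notation M := 'M[C]_N.+1.
Variable K : M.
Hypothesis hK : K * K = -1.

Lemma Kpow m : K ^+ m = (-1) ^+ (m./2) *: (if odd m then K else 1).
Proof.
elim: m => [|m IH]; first by rewrite expr0 scale1r.
rewrite exprSr IH -uphalfE uphalf_half; case: (boolP (odd m)) => hm /=.
  by rewrite hm /= -scalerAl hK add1n exprS mulN1r scaleNr scalerN.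
by rewrite (negbTE hm) /= -scalerAl mul1r add0n.
Qed.

Lemma half_pred_odd m : odd m -> m.-1./2 = m./2.
Proof.
move=> hm; have h2 : (m %% 2 = 1)%N by rewrite modn2 hm.
rewrite -!divn2; lia.
Qed.

Lemma term (t : R) m : ((m`!)%:R)^-1 *: (t%:C *: K) ^+ m =
  (cos_coeff t m)%:C *: 1 + (sin_coeff t m)%:C *: K.
Proof.
rewrite exprZn Kpow /cos_coeff /sin_coeff /=; case: (boolP (odd m)) => hm /=.
  rewrite half_pred_odd // mul0r !mul0r rmorph0 scale0r add0r !scalerA.
  congr (_ *: _); rewrite !rmorphM fmorphV !rmorphXn !rmorph_nat ?rmorphN ?rmorph1; ring.
rewrite !mul0r rmorph0 scale0r addr0 !scalerA.
congr (_ *: _); rewrite !rmorphM fmorphV !rmorphXn !rmorph_nat ?rmorphN ?rmorph1; ring.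
Qed.

Lemma partial (t : R) m : expm_partial (t%:C *: K) m =
  (\sum_(i < m) cos_coeff t i)%:C *: 1 + (\sum_(i < m) sin_coeff t i)%:C *: K.
Proof.
elim: m => [|m IH]; first by rewrite /expm_partial !big_ord0 rmorph0 !scale0r addr0.
rewrite /expm_partial big_ord_recr /= -/(expm_partial _ m) IH !big_ord_recr /=.
by rewrite !rmorphD !scalerDl term addrACA.
Qed.

Lemma expm_rot (t : R) : expm (t%:C *: K) = (cos t)%:C *: 1 + (sin t)%:C *: K.
Proof.
apply/matrixP => a b; rewrite /expm [LHS]mxE [RHS]mxE [X in _ = X + _]mxE [X in _ = _ + X]mxE.
apply/eqP; rewrite eq_complex; apply/andP; split; apply/eqP; rewrite /= ?raddfD /= ?ReE ?ImE.
- apply: (lim_ext (g := fun m => series (cos_coeff t) m * complex.Re ((1 : M) a b) +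
                                series (sin_coeff t) m * complex.Re (K a b))).
    move=> m /=; rewrite partial !mxE raddfD /= !ReE /series /= !big_mkord //.
  by apply: cvgD; apply: cvgMr_tmp; [exact: cvg_cos | exact: cvg_sin].
- apply: (lim_ext (g := fun m => series (cos_coeff t) m * complex.Im ((1 : M) a b) +
                                series (sin_coeff t) m * complex.Im (K a b))).
    move=> m /=; rewrite partial !mxE raddfD /= !ImE /series /= !big_mkord //.
  by apply: cvgD; apply: cvgMr_tmp; [exact: cvg_cos | exact: cvg_sin].
Qed.

End Expm.

Section Gen.
Variable R : realType.
Local Notation C := R[i].
Variables n k : nat.
Hypothesis hn : (2 <= n)%N.
Hypothesis hk : (0 < k <= n)%N.
Variable N : nat.
Local Notation M := 'M[C]_N.+1.
Variable Wf : nat -> M.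
Hypothesis hsq : forall j, (0 < j <= n)%N -> Wf j * Wf j = 1.
Hypothesis hadjW : forall j, (0 < j <= n)%N -> adj (Wf j) = Wf j.
Hypothesis hanti : forall i j, (0 < i <= n)%N -> (0 < j <= n)%N -> i != j ->
  Wf i * Wf j = - (Wf j * Wf i).

Definition L (v : nat -> R) : M := \sum_(1 <= j < n.+1) (v j)%:C *: Wf j.

Lemma L_ext v v' : (forall j, (0 < j <= n)%N -> v j = v' j) -> L v = L v'.
Proof. by move=> h; apply: eq_big_nat => j /andP[h1 h2]; rewrite h // h1 -ltnS. Qed.

Lemma split2 (F : nat -> M) r a b : uniq r -> a \in r -> b \in r -> a != b ->
  \sum_(i <- r) F i = F a + (F b + \sum_(i <- r | (i != a) && (i != b)) F i).
Proof.
move=> u ha hb hab; rewrite (bigD1_seq a) //; congr (_ + _).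
rewrite -big_filter (bigD1_seq b) ?filter_uniq ?mem_filter 1?eq_sym ?hab ?hb //.
by rewrite big_filter_cond.
Qed.

Lemma sc3 (A Y B : M) (x : C) : A * (x *: Y) * B = x *: (A * Y * B).
Proof. by rewrite -scalerAr -scalerAl. Qed.

Definition Tm (a b : nat) (th : R) : M :=
  (cos (th / 2))%:C *: 1 + (sin (th / 2))%:C *: (Wf a * Wf b).

Lemma givens a b v th : (0 < a <= n)%N -> (0 < b <= n)%N -> a != b ->
  Tm a b th * L v * adj (Tm a b th) =
  L (fun j => if j == a then cos th * v a + sin th * v b
              else if j == b then cos th * v b - sin th * v a else v j).
Proof.
move=> ha hb hab.
set c := (cos (th / 2))%:C; set s := (sin (th / 2))%:C.
have hA := hsq ha; have hB := hsq hb.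
have hAB := hanti ha hb hab.
have hadj : adj (Tm a b th) = c *: 1 - s *: (Wf a * Wf b).
  by rewrite /Tm adjD !adjZ adj1 adjM !hadjW // !conjc_real hAB scalerN opprK.
have hcs : c * c + s * s = 1.
  by rewrite /c /s -!rmorphM -rmorphD -!expr2 cos2Dsin2 rmorph1.
rewrite hadj /L /Tm -/c -/s big_distrr big_distrl /=.
have u : uniq (index_iota 1 n.+1) by rewrite /index_iota iota_uniq.
have ma : a \in index_iota 1 n.+1 by rewrite mem_index_iota ltnS.
have mb : b \in index_iota 1 n.+1 by rewrite mem_index_iota ltnS.
rewrite (split2 _ u ma mb hab) [RHS](split2 _ u ma mb hab).
rewrite (eqxx a) (eq_sym b a) (negbTE hab) (eqxx b).
rewrite !sc3 (TAT hA hB hAB) (TBT hA hB hAB).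
have -> : \sum_(i <- index_iota 1 n.+1 | (i != a) && (i != b))
     (c *: 1 + s *: (Wf a * Wf b)) * ((v i)%:C *: Wf i) * (c *: 1 - s *: (Wf a * Wf b))
   = \sum_(i <- index_iota 1 n.+1 | (i != a) && (i != b))
     ((if i == a then cos th * v a + sin th * v b
       else if i == b then cos th * v b - sin th * v a else v i)%:C *: Wf i).
  rewrite big_seq_cond [RHS]big_seq_cond; apply: eq_bigr => i /andP[hi /andP[hia hib]].
  rewrite (negbTE hia) (negbTE hib) sc3; congr (_ *: _).
  rewrite mem_index_iota ltnS in hi.
  have hiA : Wf a * Wf i = - (Wf i * Wf a) by apply: hanti; rewrite // eq_sym.
  have hiB : Wf b * Wf i = - (Wf i * Wf b) by apply: hanti; rewrite // eq_sym.
  by rewrite (Tcomm c s hiA hiB) -mulrA (TT hA hB hAB) hcs scale1r mulr1.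
have hcos : cos th = cos (th / 2) * cos (th / 2) - sin (th / 2) * sin (th / 2).
  by rewrite -cosD -splitr.
have hsin : sin th = cos (th / 2) * sin (th / 2) + cos (th / 2) * sin (th / 2).
  by have := sinD (th / 2) (th / 2); rewrite -splitr => ->; rewrite mulrC.
rewrite hcos hsin !(rmorphD, rmorphB, rmorphM) -/c -/s.
rewrite addrA [RHS]addrA; congr (_ + _); apply/matrixP => i j; rewrite !mxE; ring.
Qed.
End Gen.

Section Reals.
Variable R : realType.

Lemma sin_atan (x : R) : sin (atan x) = x * cos (atan x).
Proof.
have hc : cos (atan x) != 0 by rewrite cos_atan invr_eq0 sqrtr_eq0 -ltNge ltr_pwDl // sqr_ge0.
by rewrite -{2}(atanK x) /tan divfK.
Qed.

Lemma rot_zero (p y : R) : 0 < p ->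
  cos (atan (y / p)) * y - sin (atan (y / p)) * p = 0.
Proof.
move=> hp; rewrite sin_atan; field; exact: lt0r_neq0.
Qed.

Lemma rot_val (p y w : R) : 0 < p -> 0 <= w -> w ^+ 2 = p ^+ 2 + y ^+ 2 ->
  cos (atan (y / p)) * p + sin (atan (y / p)) * y = w.
Proof.
move=> hp hw hw2; rewrite sin_atan cos_atan.
set r := Num.sqrt _.
have hr0 : 0 < r by rewrite sqrtr_gt0 ltr_pwDl // sqr_ge0.
have hr2 : r ^+ 2 = 1 + (y / p) ^+ 2 by rewrite sqr_sqrtr // addr_ge0 // sqr_ge0.
have hrp : w = r * p.
  have h1 : w ^+ 2 = (r * p) ^+ 2.
    rewrite hw2 exprMn hr2; field; exact: lt0r_neq0.
  have h2 : 0 <= r * p by rewrite mulr_ge0 // ltW.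
  by rewrite -(ger0_norm hw) -(ger0_norm h2) -!sqrtr_sqr h1.
rewrite hrp.
have -> : r * p = r ^+ 2 * p / r by field; exact: lt0r_neq0.
rewrite hr2; field; apply/andP; split; exact: lt0r_neq0.
Qed.
End Reals.


Section Consts.
Variable R : realType.
Variables n k : nat.
Hypothesis hn : (2 <= n)%N.
Hypothesis hk : (0 < k <= n)%N.

Lemma n_gt0 : (0 : R) < n%:R.
Proof. by rewrite ltr0n; lia. Qed.
Lemma n1_gt0 : (0 : R) < n%:R - 1.
Proof. by rewrite subr_gt0 (_ : 1 = 1%:R) // ltr_nat; lia. Qed.

Lemma ep_gt0 : 0 < eps R n.
Proof. by rewrite /eps invr_gt0 sqrtr_gt0 mulr_gt0 // ?n_gt0 ?n1_gt0. Qed.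
Lemma ep2 : eps R n ^+ 2 = (n%:R * (n%:R - 1))^-1.
Proof. by rewrite /eps exprVn sqr_sqrtr // mulr_ge0 // ltW // ?n_gt0 ?n1_gt0. Qed.
Lemma ck_gt0 : 0 < c R n k k.
Proof. by rewrite /c eqxx sqrtr_gt0 divr_gt0 // ?n_gt0 ?n1_gt0. Qed.
Lemma ck2 : c R n k k ^+ 2 = (n%:R - 1) / n%:R.
Proof. by rewrite /c eqxx sqr_sqrtr // divr_ge0 // ltW // ?n_gt0 ?n1_gt0. Qed.
Lemma c_ne j : j != k -> c R n k j = eps R n.
Proof. by rewrite /c => /negbTE ->. Qed.

Lemma sqrt_nat2 m : Num.sqrt (m%:R : R) ^+ 2 = m%:R.
Proof. by rewrite sqr_sqrtr // ler0n. Qed.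

Lemma total1 : (k.-1)%:R * eps R n ^+ 2 + c R n k k ^+ 2 + (n - k)%:R * eps R n ^+ 2 = 1.
Proof.
have e : (k.-1 + (n - k) = n.-1)%N by lia.
have e2 : ((n.-1)%:R : R) = n%:R - 1.
  by rewrite -subn1 natrB //; lia.
rewrite addrAC -mulrDl -natrD e e2 ep2 ck2.
have h1 := n_gt0; have h2 := n1_gt0.
field; apply/andP; split; exact: lt0r_neq0.
Qed.
End Consts.


Section Chain.
Variable R : realType.
Local Notation C := R[i].
Variables n k : nat.
Hypothesis hn : (2 <= n)%N.
Hypothesis hk : (0 < k <= n)%N.
Variable N : nat.
Local Notation M := 'M[C]_N.+1.
Variable Wf : nat -> M.
Hypothesis hsq : forall j, (0 < j <= n)%N -> Wf j * Wf j = 1.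
Hypothesis hadjW : forall j, (0 < j <= n)%N -> adj (Wf j) = Wf j.
Hypothesis hanti : forall i j, (0 < i <= n)%N -> (0 < j <= n)%N -> i != j ->
  Wf i * Wf j = - (Wf j * Wf i).
Local Notation LL := (L n Wf).
Local Notation ep := (eps R n).
Local Notation ck := (c R n k k).

Definition am m := if (m < k)%N then m.+1 else m.
Definition bm m := if (m < k)%N then m else m.+1.
Definition RotG m := Tm Wf (am m) (bm m) (theta R n k m).

Lemma gstep a b v w : (0 < a <= n)%N -> (0 < b <= n)%N -> a != b ->
  0 < v a -> 0 <= w -> w ^+ 2 = v a ^+ 2 + v b ^+ 2 ->
  Tm Wf a b (atan (v b / v a)) * LL v * adj (Tm Wf a b (atan (v b / v a))) =
  LL (fun j => if j == a then w else if j == b then 0 else v j).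
Proof.
move=> ha hb hab hva hw hw2; rewrite (givens hsq hadjW hanti) //.
apply: L_ext => j hj; case: eqP => _; first exact: rot_val.
by case: eqP => // _; rewrite rot_zero.
Qed.

Lemma conjM (X Y Z : M) : (X * Y) * Z * adj (X * Y) = X * (Y * Z * adj Y) * adj X.
Proof. by rewrite adjM !mulrA. Qed.

Definition vl m j : R :=
  if (j <= m)%N then 0 else if j == m.+1 then
    (if (m.+1 < k)%N then Num.sqrt (m.+1)%:R * ep else Num.sqrt (m%:R * ep ^+ 2 + ck ^+ 2))
  else c R n k j.

Definition PL m := \prod_(i < m) RotG (m - i).
Lemma PL_S m : PL m.+1 = RotG m.+1 * PL m.
Proof.
rewrite /PL big_ord_recl subn0; congr (_ * _).
Qed.

Lemma left_inv m : (m <= k.-1)%N -> PL m * LL (c R n k) * adj (PL m) = LL (vl m).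
Proof.
have hep := ep_gt0 R hn hk.
have hck := ck_gt0 R hn hk.
elim: m => [|m IH] hm.
  rewrite /PL big_ord0 mul1r adj1 mulr1; apply: L_ext => j /andP[hj1 hj2]; rewrite /vl.
  rewrite leqNgt hj1 /=; case: (eqVneq j 1) => [->|hj] //.
  case: ifP => h1k.
    by rewrite c_ne ?sqrtr1 ?mul1r //; apply/eqP; lia.
  have ek : k = 1%N by lia.
  rewrite mul0r add0r sqrtr_sqr ger0_norm ?(ltW hck) //.
  by rewrite ek.
rewrite PL_S conjM IH; last by lia.
rewrite /RotG /am /bm (_ : (m.+1 < k)%N = true); last by apply/idP; lia.
have hsm : 0 < Num.sqrt ((m.+1)%:R : R) by rewrite sqrtr_gt0 ltr0n.
case: (ltnP m.+2 k) => h2.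
  have va : vl m m.+2 = ep.
    rewrite /vl (@c_ne R n k m.+2); last by apply/eqP; lia.
    by bdec.
  have vb : vl m m.+1 = Num.sqrt (m.+1)%:R * ep.
    by rewrite /vl; bdec.
  have -> : theta R n k m.+1 = atan (vl m m.+1 / vl m m.+2).
    rewrite /theta va vb (_ : (m.+1 < k)%N = true); last by apply/idP; lia.
    rewrite (_ : (m.+1 < k.-1)%N = true); last by apply/idP; lia.
    by congr atan; field; exact: lt0r_neq0.
  have hw2 : vl m.+1 m.+2 ^+ 2 = vl m m.+2 ^+ 2 + vl m m.+1 ^+ 2.
    rewrite va vb /vl; bdec; rewrite /= !exprMn !sqrt_nat2 -[(m.+2)%:R]natr1; ring.
  have hw : 0 <= vl m.+1 m.+2.
    by rewrite /vl; bdec; rewrite /= mulr_ge0 ?sqrtr_ge0 ?(ltW hep).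
  have hva : 0 < vl m m.+2 by rewrite va.
  rewrite (gstep _ _ _ hva hw hw2); try lia.
  apply: L_ext => j hj; rewrite /vl; bdec.
have ek : k = m.+2 by lia.
have va : vl m m.+2 = ck by rewrite /vl /c; bdec; rewrite ek eqxx.
have vb : vl m m.+1 = Num.sqrt (m.+1)%:R * ep.
  by rewrite /vl; bdec.
have -> : theta R n k m.+1 = atan (vl m m.+1 / vl m m.+2).
  rewrite /theta va vb (_ : (m.+1 < k)%N = true); last by apply/idP; lia.
  rewrite (_ : (m.+1 < k.-1)%N = false); last by apply/negbTE; lia.
  by rewrite ek.
have hw2 : vl m.+1 m.+2 ^+ 2 = vl m m.+2 ^+ 2 + vl m m.+1 ^+ 2.
  rewrite va vb /vl; bdec; rewrite /= sqr_sqrtr ?exprMn ?sqrt_nat2; first ring.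
  by apply: addr_ge0; [apply: mulr_ge0; [exact: ler0n | exact: sqr_ge0] | exact: sqr_ge0].
have hw : 0 <= vl m.+1 m.+2 by rewrite /vl; bdec; rewrite /= sqrtr_ge0.
have hva : 0 < vl m m.+2 by rewrite va.
rewrite (gstep _ _ _ hva hw hw2); try lia.
apply: L_ext => j hj; rewrite /vl; bdec.
Qed.
End Chain.


Section Right.
Variable R : realType.
Local Notation C := R[i].
Variables n k : nat.
Hypothesis hn : (2 <= n)%N.
Hypothesis hk : (0 < k <= n)%N.
Variable N : nat.
Local Notation M := 'M[C]_N.+1.
Variable Wf : nat -> M.
Hypothesis hsq : forall j, (0 < j <= n)%N -> Wf j * Wf j = 1.
Hypothesis hadjW : forall j, (0 < j <= n)%N -> adj (Wf j) = Wf j.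
Hypothesis hanti : forall i j, (0 < i <= n)%N -> (0 < j <= n)%N -> i != j ->
  Wf i * Wf j = - (Wf j * Wf i).
Local Notation LL := (L n Wf).
Local Notation ep := (eps R n).
Local Notation ck := (c R n k k).
Local Notation vf := (vl R n k k.-1).

Definition Q m := \prod_(m <= i < n) RotG n k Wf i.
Lemma Q_S m : (m < n)%N -> Q m = RotG n k Wf m * Q m.+1.
Proof. by move=> h; rewrite /Q big_ltn. Qed.

Definition vr m j : R :=
  if (j < m)%N then vf j else if j == m then Num.sqrt ((n - m).+1)%:R * ep else 0.

Lemma right_inv d : (k < n)%N -> (d <= n - k.+1)%N ->
  Q (n - d) * LL vf * adj (Q (n - d)) = LL (vr (n - d)).
Proof.
move=> hkn; have hep := ep_gt0 R hn hk.
elim: d => [|d IH] hd.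
  rewrite subn0 /Q big_geq // mul1r adj1 mulr1; apply: L_ext => j hj; rewrite /vr.
  case: (ltnP j n) => hjn //.
  have -> : j = n by lia.
  rewrite eqxx subnn sqrtr1 mul1r /vl (@c_ne R n k n); last by apply/eqP; lia.
  by bdec.
have em : (n - d = (n - d.+1).+1)%N by lia.
move: IH; rewrite em => IH.
set m := (n - d.+1)%N in IH *.
have hm1 : (k < m)%N by rewrite /m; lia.
have hm2 : (m < n)%N by rewrite /m; lia.
rewrite Q_S // conjM IH; last by lia.
rewrite /RotG /am /bm (_ : (m < k)%N = false); last by apply/negbTE; lia.
have va : vr m.+1 m = ep.
  rewrite /vr /vl (@c_ne R n k m); last by apply/eqP; lia.
  by bdec.
have vb : vr m.+1 m.+1 = Num.sqrt (n - m)%:R * ep.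
  by rewrite /vr ltnn eqxx (_ : (n - m.+1).+1 = n - m)%N //; lia.
have -> : theta R n k m = atan (vr m.+1 m.+1 / vr m.+1 m).
  rewrite /theta va vb (_ : (m < k)%N = false); last by apply/negbTE; lia.
  rewrite (_ : (k < m)%N = true); last by apply/idP; lia.
  by congr atan; field; exact: lt0r_neq0.
have hw2 : vr m m ^+ 2 = vr m.+1 m ^+ 2 + vr m.+1 m.+1 ^+ 2.
  rewrite va vb /vr ltnn eqxx !exprMn !sqrt_nat2 -natr1; ring.
have hw : 0 <= vr m m.
  by rewrite /vr ltnn eqxx mulr_ge0 ?sqrtr_ge0 ?(ltW hep).
have hva : 0 < vr m.+1 m by rewrite va.
rewrite (gstep hsq hadjW hanti _ _ _ hva hw hw2); try lia.
apply: L_ext => j hj; rewrite /vr; bdec.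
Qed.

Lemma L_delta : LL (fun j => if j == k then 1 else 0) = Wf k.
Proof.
have u : uniq (index_iota 1 n.+1) by rewrite /index_iota iota_uniq.
have mk : k \in index_iota 1 n.+1 by rewrite mem_index_iota ltnS.
rewrite /L (bigD1_seq k) //= eqxx rmorph1 scale1r big1 ?addr0 //.
by move=> j /negbTE ->; rewrite rmorph0 scale0r.
Qed.

Lemma main_gen : (Q k * PL n k Wf k.-1) * LL (c R n k) * adj (Q k * PL n k Wf k.-1) = Wf k.
Proof.
have hep := ep_gt0 R hn hk; have hck := ck_gt0 R hn hk.
have htot := total1 R hn hk.
rewrite conjM (left_inv hn hk hsq hadjW hanti) //.
case: (ltnP k n) => hkn.
  rewrite Q_S // conjM.
  have := right_inv hkn (leqnn (n - k.+1)).
  rewrite (_ : n - (n - k.+1) = k.+1)%N; last by lia.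
  move=> ->.
  rewrite /RotG /am /bm ltnn.
  have va : vr k.+1 k = Num.sqrt ((k.-1)%:R * ep ^+ 2 + ck ^+ 2).
    rewrite /vr /vl; bdec; rewrite /= (_ : k.-1.+1 = k) ?eqxx //; lia.
  have vb : vr k.+1 k.+1 = Num.sqrt (n - k)%:R * ep.
    by rewrite /vr ltnn eqxx (_ : (n - k.+1).+1 = n - k)%N //; lia.
  have hpos : 0 < (k.-1)%:R * ep ^+ 2 + ck ^+ 2.
    by apply: ltr_wpDl; [apply: mulr_ge0; [exact: ler0n | exact: sqr_ge0] | exact: exprn_gt0].
  have -> : theta R n k k = atan (vr k.+1 k.+1 / vr k.+1 k).
    by rewrite /theta va vb !ltnn.
  have hw2 : (1 : R) ^+ 2 = vr k.+1 k ^+ 2 + vr k.+1 k.+1 ^+ 2.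
    rewrite va vb exprMn !sqr_sqrtr ?ler0n ?(ltW hpos) // expr1n.
    by rewrite htot.
  have hva : 0 < vr k.+1 k by rewrite va sqrtr_gt0.
  rewrite (gstep hsq hadjW hanti _ _ _ hva ler01 hw2); try lia.
  rewrite -L_delta; apply: L_ext => j hj; rewrite /vr /vl; bdec.
have ekn : k = n by lia.
rewrite /Q big_geq ?mul1r ?adj1 ?mulr1; last by lia.
rewrite -L_delta; apply: L_ext => j hj; rewrite /vl.
case: (eqVneq j k) => [->|hjk].
  rewrite (_ : (k <= k.-1)%N = false); last by apply/negbTE; lia.
  rewrite (_ : k.-1.+1 = k); last by lia.
  rewrite eqxx ltnn.
  rewrite (_ : (n - k = 0)%N) ?mulr0n ?mul0r ?addr0 in htot; last by lia.
  by rewrite htot sqrtr1.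
by bdec.
Qed.
End Right.

Section Final.
Variable R : realType.
Variables n k : nat.
Hypothesis hn : (2 <= n)%N.
Hypothesis hk : (1 <= k <= n)%N.

Lemma Rot_eq m : (0 < m < n)%N -> Rot R n k m = RotG n k (W R n k) m.
Proof.
move=> /andP[hm1 hm2].
have hs : forall x : R[i], - 'i * x * 'i = x.
  by move=> x; rewrite mulrAC mulNr -expr2 sqr_i opprK mul1r.
rewrite /Rot /G /RotG /Tm /am /bm; case: (ltnP m k) => h; rewrite scalerA hs expm_rot //.
all: apply: KK; [apply: W_sq | apply: W_sq | apply: W_anti] => //.
all: try lia.
all: try (apply/eqP; lia).
Qed.

Lemma final : U R n k * O_k R n k * adj (U R n k) = E_k R n k.
Proof.
have eR : U_R R n k = Q n k (W R n k) k.
  rewrite /U_R /Q; apply: eq_big_nat => m hm; apply: Rot_eq; lia.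
have eL : U_L R n k = PL n k (W R n k) k.-1.
  rewrite /U_L /PL; apply: eq_bigr => i _; apply: Rot_eq.
  have := ltn_ord i; lia.
rewrite /U eR eL.
exact: (main_gen hn hk (W_sq R hn hk) (W_adj R hn hk) (W_anti R hn hk)).
Qed.
End Final.

Theorem theorem1 (R : realType) (n k : nat) :
  (2 <= n)%N -> (1 <= k <= n)%N ->
  U R n k * O_k R n k * adj (U R n k) = E_k R n k.
Proof. by move=> hn hk; apply: final. Qed.
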